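(* Let $(W,g,V)\in BT_n$. Let $a=\dim(W\cap V^\perp)$, $b=\dim(V\cap W^\perp)$, and let $c$ be the rank of the pairing $\langle-,-\rangle$ restricted to $(W\cap\mathbb{F}_q^n)\times(V\cap\mathbb{F}_q^n)$. Then there is $x\in GL_n(\mathbb{F}_q)$ with $x\cdot(W,g,V)=(W',g',V')$ where, writing $E_1=\mathrm{span}\{e_1,\dots,e_a\}$, $E_2=\mathrm{span}\{e_{a+1},\dots,e_{n-b-c}\}$, $E_3=\mathrm{span}\{e_{n-b-c+1},\dots,e_{n-c}\}$, $E_4=\mathrm{span}\{e_{n-c+1},e_{n-c+2},\dots\}$, we have $V'=E_3\oplus E_4$, $W'=E_1\oplus E_4$, and $g'$, as an element of $GL_n(\mathbb{F}_q)$ written in blocks of sizes $a,\,n-a-b-c,\,b,\,c$, has the form \[ \begin{bmatrix}\mathrm{Id}&0&0&0\\ C&A&0&0\\ D&B&\mathrm{Id}&0\\ 0&0&0&\mathrm{Id}\end{bmatrix} \] for some matrices $A,B,C,D$.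
   Context: $\mathbb{F}_q^\infty$ has basis $e_1,e_2,\dots$; $\mathbb{F}_q^n=\mathrm{span}\{e_1,\dots,e_n\}$. $GL_\infty(\mathbb{F}_q)=\varinjlim GL_n(\mathbb{F}_q)$ under $g\mapsto\operatorname{diag}(g,\mathrm{Id})$, i.e. invertible $\mathbb{Z}_{>0}\times\mathbb{Z}_{>0}$ matrices differing from the identity in finitely many entries; $g^T$ is the transpose. A subspace is smooth if it contains $e_i$ for all sufficiently large $i$. A bounding triple is $(W,g,V)$ with $W,V$ smooth, $g\in GL_\infty(\mathbb{F}_q)$, $g$ acting as identity on $V$ and $g^T$ acting as identity on $W$. $BT_n$ is the set of bounding triples with $e_{n+1},e_{n+2},\dots\in V\cap W$. $GL_\infty(\mathbb{F}_q)$ acts by $x\cdot(W,g,V)=(x^{-T}W,xgx^{-1},xV)$, $x^{-T}=(x^{-1})^T$. $\langle-,-\rangle$ is the bilinear pairing with $\langle e_i,e_j\rangle=\delta_{ij}$; $W^\perp=\{v:\langle w,v\rangle=0\ \forall w\in W\}$ and $V^\perp=\{w:\langle w,v\rangle=0\ \forall v\in V\}$. *)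

(* Defs.v *)
From HB Require Import structures.
From mathcomp Require Import all_boot all_order all_algebra.
Set Implicit Arguments. Unset Strict Implicit. Unset Printing Implicit Defensive.
Import GRing.Theory.
Local Open Scope ring_scope.

(* A bounding triple (W,g,V) in BT_n is determined by its restriction to
   F_q^n = span{e_1..e_n}: W = W_n (+) span{e_i | i>n}, V = V_n (+) span{e_i | i>n},
   g = diag(g_n, Id).  We represent:
   - a subspace of F_q^n by a matrix 'M[F]_n whose ROW space is the subspace;
     a vector of F_q^n is a row vector 'rV[F]_n of coordinates in e_1..e_n
     (0-indexed: coordinate i : 'I_n is the coefficient of e_(i+1));
   - g_n by a matrix g : 'M[F]_n acting on column vectors (v |-> g v), i.e. on
     row vectors by v |-> v *m g^T;
   - the pairing <u,v> = sum_i u_i v_i, i.e. u *m v^T. *)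

Section Defs.
Variable F : fieldType.
Variable n : nat.

Definition is_BTn (W g V : 'M[F]_n) : Prop :=
  [/\ g \in unitmx,
      (forall v : 'rV[F]_n, (v <= V)%MS -> v *m g^T = v) &
      (forall w : 'rV[F]_n, (w <= W)%MS -> w *m g = w)].

(* V^perp = {w : <w,v> = 0 for all v in V}  (it lies in F_q^n since V contains
   e_i for all i > n). *)
Definition perp (V : 'M[F]_n) : 'M[F]_n := kermx V^T.

(* rank of the pairing <-,-> restricted to W x V: rank of the Gram matrix
   of spanning families of W and V. *)
Definition pairing_rank (W V : 'M[F]_n) : nat := \rank (W *m V^T).

(* the action x.(W,g,V) = (x^{-T} W, x g x^{-1}, x V), x in GL_n *)
Definition act_W (x W : 'M[F]_n) : 'M[F]_n := W *m invmx x.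
Definition act_g (x g : 'M[F]_n) : 'M[F]_n := x *m g *m invmx x.
Definition act_V (x V : 'M[F]_n) : 'M[F]_n := V *m x^T.

Definition coord_span (P : pred 'I_n) : 'M[F]_n :=
  \matrix_(i, j) ((P i && (i == j))%:R).

Definition V_normal (b c : nat) : 'M[F]_n :=
  coord_span (fun i : 'I_n => (n - b - c <= i)%N).
Definition W_normal (a c : nat) : 'M[F]_n :=
  coord_span (fun i : 'I_n => (i < a)%N || (n - c <= i)%N).

Definition block_form (a b c : nat) (M : 'M[F]_n) : Prop :=
  let blk1 := fun i : 'I_n => (i < a)%N in
  let blk2 := fun i : 'I_n => (a <= i < n - b - c)%N in
  let blk3 := fun i : 'I_n => (n - b - c <= i < n - c)%N in
  let blk4 := fun i : 'I_n => (n - c <= i)%N in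
  [/\ forall i j, blk1 i -> M i j = (i == j)%:R,
      forall i j, blk2 i -> blk3 j || blk4 j -> M i j = 0,
      forall i j, blk3 i -> blk3 j -> M i j = (i == j)%:R,
      forall i j, blk3 i -> blk4 j -> M i j = 0 &
      forall i j, blk4 i -> M i j = (i == j)%:R].

End Defs.

(* Main.v *)
Require Import Defs.
From HB Require Import structures.
From mathcomp Require Import all_boot all_order all_algebra.
From mathcomp Require Import zify.
Set Implicit Arguments. Unset Strict Implicit. Unset Printing Implicit Defensive.
Import GRing.Theory.
Local Open Scope ring_scope.


Section H.
Variable F : fieldType.

Lemma row_D n (S : pred 'I_n) (M : 'M[F]_n) i :
  row i (@Defs.coord_span F _ S *m M) = if S i then row i M else 0.
Proof.
apply/rowP => j; rewrite !mxE (bigD1 i) //= big1 ?addr0.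
  by rewrite !mxE eqxx andbT; case: (S i); rewrite ?mul1r ?mul0r ?mxE.
by move=> k /negbTE kNi; rewrite !mxE eq_sym kNi andbF mul0r.
Qed.

Lemma D_cols n m (S : pred 'I_n) (M : 'M[F]_(m, n)) :
  (forall k j, ~~ S j -> M k j = 0) -> (M <= @Defs.coord_span F _ S)%MS.
Proof.
move=> H; suff <- : M *m @Defs.coord_span F _ S = M by apply: submxMl.
apply/matrixP => k j; rewrite !mxE (bigD1 j) //= big1 ?addr0.
  rewrite !mxE eqxx andbT; case Sj: (S j); first by rewrite mulr1.
  by rewrite mulr0 H ?Sj.
by move=> l /negbTE lNj; rewrite !mxE lNj andbF mulr0.
Qed.

Lemma rank_sum_le n I (r : seq I) (P : pred I) (M : I -> 'M[F]_n) :
  (\rank (\sum_(i <- r | P i) M i)%R <= \sum_(i <- r | P i) \rank (M i))%N.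
Proof.
apply: (big_ind2 (fun (A : 'M[F]_n) k => \rank A <= k)%N).
- by rewrite mxrank0.
- move=> A1 k1 A2 k2 h1 h2.
  have h3 := mxrankS (addmx_sub_adds (submx_refl A1) (submx_refl A2)).
  have h4 := mxrank_adds_leqif A1 A2.
  have h5 := h4.1.
  exact: leq_trans h3 (leq_trans h5 (leq_add h1 h2)).
- by move=> *.
Qed.

Lemma rank_D n (S : pred 'I_n) : (\rank (@Defs.coord_span F _ S) <= #|S|)%N.
Proof.
have -> : @Defs.coord_span F _ S = \sum_(i | S i) delta_mx i i.
  apply/matrixP => i j; rewrite !mxE summxE.
  case Si: (S i) => /=.
    rewrite (bigD1 i) //= big1 ?addr0; first by rewrite mxE eqxx /= eq_sym.
    by move=> k /andP[_ /negbTE kNi]; rewrite mxE eq_sym kNi.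
  by rewrite big1 // => k Sk; rewrite mxE; case: (eqVneq i k) => [ki|] /=; [by move: Si; rewrite ki Sk|].
apply: leq_trans (rank_sum_le _ _ _) _.
by rewrite (eq_bigr (fun _ => 1%N)) ?sum1_card // => i _; rewrite mxrank_delta.
Qed.

Local Open Scope nat_scope.
Lemma card_sum n (S : pred 'I_n) : #|S| = \sum_(i < n) (S i : nat).
Proof.
rewrite -sum1_card big_mkcond /=; apply: eq_bigr => i _; rewrite /in_mem /=; by case: (S i).
Qed.

Lemma sum_ge n k : \sum_(i < n) ((k <= i)%N : nat) = n - k.
Proof.
elim: n => [|n IH]; first by rewrite big_ord0.
rewrite big_ord_recr /= IH; case: leqP => h /=; lia.
Qed.

Lemma sum_lt n a : \sum_(i < n) ((i < a)%N : nat) = minn a n.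
Proof.
elim: n => [|n IH]; first by rewrite big_ord0 minn0.
rewrite big_ord_recr /= IH; case: leqP => h /=; lia.
Qed.

Lemma card_ge n k : #|(fun i : 'I_n => (k <= i)%N)| = n - k.
Proof. by rewrite card_sum sum_ge. Qed.

Lemma card_W n a c : a + c <= n ->
  #|(fun i : 'I_n => (i < a)%N || (n - c <= i)%N)| = a + c.
Proof.
move=> h; rewrite card_sum.
rewrite (eq_bigr (fun i : 'I_n => ((i < a)%N : nat) + ((n - c <= i)%N : nat))).
  by rewrite big_split /= sum_lt sum_ge; lia.
move=> i _ /=; case: (ltnP i a) => h1; case: (leqP (n - c) i) => h2 //=; lia.
Qed.
Local Open Scope ring_scope.
End H.

Section R.
Variable F : fieldType.
Variable n : nat.

Definition rowk m (A : 'M[F]_(m, n)) (k : nat) : 'rV[F]_n :=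
  match insub k : option 'I_(\rank A) with Some i => row i (row_base A) | None => 0 end.

Lemma rowk_sub m (A : 'M[F]_(m, n)) k : (rowk A k <= A)%MS.
Proof.
rewrite /rowk; case: insubP => [i _ _|_]; last by apply: sub0mx.
by apply: submx_trans (row_sub i (row_base A)) _; rewrite eq_row_base.
Qed.

Lemma rowk_val m (A : 'M[F]_(m, n)) (i : 'I_(\rank A)) : rowk A i = row i (row_base A).
Proof. by rewrite /rowk valK. Qed.

Lemma base_in m (A : 'M[F]_(m, n)) (M : 'M[F]_n) (S : pred 'I_n) :
  (forall k : 'I_(\rank A), exists2 i : 'I_n, S i & row i M = rowk A k) ->
  (A <= @Defs.coord_span F _ S *m M)%MS.
Proof.
move=> H; rewrite -(eq_row_base A); apply/row_subP => k.
have [i Si e] := H k; rewrite -rowk_val -e.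
by have := row_D S M i; rewrite Si => <-; apply: row_sub.
Qed.

End R.
Section More.
Variable F : fieldType.
Variable n : nat.

Lemma cap_diff0 (A B C : 'M[F]_n) : (C <= B)%MS -> \rank ((A :\: B) :&: C)%MS = 0%N.
Proof.
move=> sCB; apply/eqP; rewrite -leqn0 -(mxrank0 F n n) mxrankS //.
rewrite -(capmx_diff A B) sub_capmx capmxSl /=.
exact: submx_trans (capmxSr _ _) sCB.
Qed.

Lemma place m (A : 'M[F]_(m, n)) (M : 'M[F]_n) (S : pred 'I_n) off sz :
  (\rank A <= sz)%N -> (off + sz <= n)%N ->
  (forall i : 'I_n, (off <= i < off + sz)%N -> S i) ->
  (forall i : 'I_n, (off <= i < off + sz)%N -> row i M = rowk A (i - off)) ->
  (A <= @Defs.coord_span F _ S *m M)%MS.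
Proof.
move=> hr hn hS hM; apply: base_in => k.
have hk : (off + k < n)%N by have := ltn_ord k; lia.
have hin : (off <= Ordinal hk < off + sz)%N by rewrite /=; have := ltn_ord k; lia.
by exists (Ordinal hk); [apply: hS | rewrite hM //= addKn].
Qed.

Lemma fix_rows (U M : 'M[F]_n) (S : pred 'I_n) :
  (forall u : 'rV[F]_n, (u <= U)%MS -> u *m M = u) ->
  (@Defs.coord_span F _ S <= U)%MS ->
  forall i j, S i -> M i j = (i == j)%:R.
Proof.
move=> H sub i j Si.
have e1 : row i M = row i (@Defs.coord_span F _ S *m M) by rewrite row_D Si.
have e2 : row i (@Defs.coord_span F _ S) = row i (1%:M : 'M[F]_n).
  by rewrite -[X in row i X = _]mulmx1 row_D Si.
have e : row i M = row i (1%:M : 'M[F]_n).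
  rewrite e1 row_mul H; first exact: e2.
  exact: submx_trans (row_sub _ _) sub.
by have := congr1 (fun r : 'rV[F]_n => r 0 j) e; rewrite !mxE.
Qed.

Lemma neq_ord (i j : 'I_n) k : (i < k)%N -> (k <= j)%N -> (i == j) = false.
Proof. by move=> h1 h2; apply/negbTE/eqP => e; rewrite e in h1; lia. Qed.

End More.

Theorem proposition4p9 (F : finFieldType) (n : nat) (W g V : 'M[F]_n) :
  is_BTn W g V ->
  let a : nat := \rank (W :&: perp V)%MS in
  let b : nat := \rank (V :&: perp W)%MS in
  let c : nat := pairing_rank W V in
  exists2 x : 'M[F]_n, x \in unitmx &
    [/\ (act_V x V == @V_normal F n b c)%MS,
        (act_W x W == @W_normal F n a c)%MS &
        block_form a b c (act_g x g)].
Proof.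
case=> gU HV HW a b c.
set P := perp V.
have rPe : \rank P = (n - \rank V)%N by rewrite /P /perp mxrank_ker mxrank_tr.
have ce : c = \rank (V *m W^T) by rewrite /c /pairing_rank -mxrank_tr trmx_mul trmxK.
have rVe : \rank V = (b + c)%N.
  by rewrite ce addnC /b /perp mxrank_mul_ker.
have rWe : \rank W = (a + c)%N.
  by rewrite /a /c /pairing_rank /perp addnC mxrank_mul_ker.
have rVn : (\rank V <= n)%N := rank_leq_col V.
have rWn : (\rank W <= n)%N := rank_leq_col W.
have aP : (a <= \rank P)%N := mxrankS (capmxSr W P).
set A1 := (W :&: P)%MS.
have ha : \rank A1 = a by [].
set A2 := (P :\: W)%MS.
set A4 := (W :\: P)%MS.
set A3 := ((A1 + A2 + A4)^C)%MS.
have A12 : (A1 + A2 :=: P)%MS.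
  by rewrite /A1 capmxC addsmxC; exact: addsmx_diff_cap_eq.
have A14 : (A4 + A1 :=: W)%MS by exact: addsmx_diff_cap_eq.
have r2 : (\rank A2 + a = \rank P)%N.
  have := mxrank_sum_cap A2 A1; rewrite cap_diff0 ?capmxSl // addn0.
  by rewrite addsmxC A12 ha.
have r4 : (\rank A4 + a = \rank W)%N.
  have := mxrank_sum_cap A4 A1; rewrite cap_diff0 ?capmxSr // addn0.
  by rewrite A14 ha.
have r3 : \rank A3 = b.
  have e : (A1 + A2 + A4 :=: P + A4)%MS := adds_eqmx A12 (eqmx_refl _).
  rewrite /A3 mxrank_compl e.
  have := mxrank_sum_cap P A4; rewrite capmxC capmx_diff mxrank0 addn0 => ->.
  lia.
have A1P : (A1 <= P)%MS by apply: capmxSr.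
have A2P : (A2 <= P)%MS by apply: diffmxSl.
have PV : forall r : 'rV[F]_n, (r <= P)%MS -> r *m V^T = 0 by move=> r /sub_kermxP.
have hab : (a <= n - b - c)%N by rewrite -subnDA -rVe -rPe.
have A3full : row_full (A1 + A2 + A4 + A3)%MS by apply: addsmx_compl_full.
clearbody A1 A2 A3 A4 P a b c.
have bcn : (b + c <= n)%N by rewrite -rVe.
have acn : (a + c <= n)%N by rewrite -rWe.
have r4c : \rank A4 = c by move: r4; rewrite rWe addnC => /addnI.
pose R := fun i : 'I_n =>
  if (i < a)%N then rowk A1 i
  else if (i < n - b - c)%N then rowk A2 (i - a)
  else if (i < n - c)%N then rowk A3 (i - (n - b - c))
  else rowk A4 (i - (n - c)).
pose x : 'M[F]_n := \matrix_(i, j) R i 0 j.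
have hrow : forall i, row i x = R i by move=> i; apply/rowP => j; rewrite !mxE.
have hx1 : forall i : 'I_n, (0 <= i < 0 + a)%N -> row i x = rowk A1 (i - 0).
  by move=> i /andP[_ h]; rewrite hrow /R h subn0.
have hx2 : forall i : 'I_n, (a <= i < a + (n - b - c - a))%N -> row i x = rowk A2 (i - a).
  move=> i /andP[h1 h2]; rewrite hrow /R.
  have -> : (i < a)%N = false by apply/negbTE; lia.
  by have -> : (i < n - b - c)%N = true by lia.
have hx3 : forall i : 'I_n, (n - b - c <= i < (n - b - c) + b)%N ->
    row i x = rowk A3 (i - (n - b - c)).
  move=> i /andP[h1 h2]; rewrite hrow /R.
  have -> : (i < a)%N = false by apply/negbTE; lia.
  have -> : (i < n - b - c)%N = false by apply/negbTE; lia.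
  by have -> : (i < n - c)%N = true by lia.
have hx4 : forall i : 'I_n, (n - c <= i < (n - c) + c)%N -> row i x = rowk A4 (i - (n - c)).
  move=> i /andP[h1 h2]; rewrite hrow /R.
  have -> : (i < a)%N = false by apply/negbTE; lia.
  have -> : (i < n - b - c)%N = false by apply/negbTE; lia.
  by have -> : (i < n - c)%N = false by apply/negbTE; lia.
clearbody R x.
have inx : forall m (A : 'M[F]_(m, n)), (A <= @Defs.coord_span F _ predT *m x)%MS ->
    (A <= x)%MS.
  by move=> m A h; apply: submx_trans h (submxMl _ _).
have s1 : (A1 <= x)%MS.
  by apply: inx; apply: (place (off := 0) (sz := a)) => //; lia.
have s2 : (A2 <= x)%MS.
  by apply: inx; apply: (place (off := a) (sz := n - b - c - a)) => //; lia.
have s3 : (A3 <= x)%MS.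
  by apply: inx; apply: (place (off := n - b - c) (sz := b)) => //; lia.
have s4 : (A4 <= x)%MS.
  by apply: inx; apply: (place (off := n - c) (sz := c)) => //; lia.
have xU : x \in unitmx.
  rewrite -row_full_unit /row_full eqn_leq rank_leq_col /=.
  move: A3full; rewrite /row_full => /eqP e.
  rewrite -[X in (X <= _)%N]e.
  by apply: mxrankS; rewrite !addsmx_sub s1 s2 s3 s4.
have xTU : x^T \in unitmx by rewrite unitmx_tr.
have hVeq : (act_V x V == @V_normal F n b c)%MS.
  have sub : (act_V x V <= @V_normal F n b c)%MS.
    apply: D_cols => k j hj.
    have rP : (row j x <= P)%MS.
      case: (ltnP j a) => hja.
        rewrite hx1; last by rewrite add0n hja.
        exact: submx_trans (rowk_sub _ _) A1P.
      rewrite hx2; last by rewrite hja subnKC // ltnNge hj.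
      exact: submx_trans (rowk_sub _ _) A2P.
    move/PV: rP => rP.
    transitivity ((row j x *m V^T) 0 k); last by rewrite rP mxE.
    by rewrite /act_V !mxE; apply: eq_bigr => l _; rewrite !mxE mulrC.
  have h := mxrank_leqif_eq sub.
  rewrite -h.2 eqn_leq h.1 /=.
  rewrite /act_V mxrankMfree ?row_free_unit // rVe.
  rewrite /V_normal; apply: leq_trans (rank_D _ _) _.
  by rewrite card_ge -subnDA subKn.
pose SW := (fun i : 'I_n => (i < a)%N || (n - c <= i)%N).
have Wsub : (W <= @Defs.coord_span F _ SW *m x)%MS.
  rewrite -A14 addsmx_sub; apply/andP; split.
    apply: (place (off := n - c) (sz := c)); last exact: hx4.
    - by rewrite r4c.
    - by rewrite subnK // (leq_trans (leq_addl b c) bcn).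
    - by move=> i /andP[h1 h2]; rewrite /SW; apply/orP; right.
  apply: (place (off := 0) (sz := a)); last exact: hx1.
  - by rewrite ha.
  - by rewrite add0n (leq_trans (leq_addr c a) acn).
  - by move=> i /andP[h1 h2]; rewrite /SW; apply/orP; left.
have hWeq : (act_W x W == @W_normal F n a c)%MS.
  have sub : (act_W x W <= @W_normal F n a c)%MS.
    have := submxMr (invmx x) Wsub; rewrite mulmxK //.
  have h := mxrank_leqif_eq sub.
  rewrite -h.2 eqn_leq h.1 /=.
  rewrite /act_W mxrankMfree ?row_free_unit ?unitmx_inv // rWe.
  rewrite /W_normal; apply: leq_trans (rank_D _ _) _.
  by rewrite card_W.
exists x => //; split => //.
set g' := act_g x g.
have hV' : forall u : 'rV[F]_n, (u <= act_V x V)%MS -> u *m g'^T = u.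
  move=> u /submxP[w ->]; rewrite /g' /act_g /act_V !trmx_mul !mulmxA.
  have e1 : x^T *m (invmx x)^T = 1%:M by rewrite -trmx_mul mulVmx // trmx1.
  rewrite -[w *m V *m x^T *m _]mulmxA e1 mulmx1.
  by rewrite HV // submxMl.
have hW' : forall u : 'rV[F]_n, (u <= act_W x W)%MS -> u *m g' = u.
  move=> u /submxP[w ->]; rewrite /g' /act_g /act_W !mulmxA.
  rewrite -[w *m W *m invmx x *m x]mulmxA mulVmx // mulmx1.
  by rewrite HW // submxMl.
have cols : forall i j : 'I_n, (n - b - c <= j)%N -> g' i j = (i == j)%:R.
  move=> i j hj.
  have := @fix_rows F n _ _ (fun k : 'I_n => (n - b - c <= k)%N) hV' _ j i hj.
  rewrite mxE eq_sym; apply.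
  by move/andP: hVeq => [_].
have rows : forall i j : 'I_n, SW i -> g' i j = (i == j)%:R.
  move=> i j hi; apply: (@fix_rows F n _ _ SW hW' _ i j hi).
  by move/andP: hWeq => [_].
have hle : (n - b - c <= n - c)%N by rewrite -subnDA leq_sub2l // leq_addl.
split => /=.
- by move=> i j hi; apply: rows; apply/orP; left.
- move=> i j /andP[h1 h2] hj.
  have hj' : (n - b - c <= j)%N.
    by case/orP: hj => [/andP[-> _]|h] //; apply: leq_trans hle h.
  by rewrite cols // (neq_ord h2 hj').
- by move=> i j _ /andP[hj _]; rewrite cols.
- move=> i j /andP[_ hi] hj; rewrite cols; last exact: leq_trans hle hj.
  by rewrite (neq_ord hi hj).
- by move=> i j hi; apply: rows; apply/orP; right.
Qed.
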